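(* Fix a constant $\Delta\ge 1$. There exists a canonical routing labeling scheme for the family of rooted trees on $n$ nodes in which every node has at most $\Delta$ children, such that every label has length $\log n+\mathcal{O}(\log\log n)$ bits. The constant in the $\mathcal{O}(\cdot)$ may depend on $\Delta$.
   Context: All logarithms are base $2$. A (designer-port) routing labeling scheme for a family $\mathcal{T}$ of rooted trees consists of an encoder and a decoder. - The encoder is given $T\in\mathcal{T}$. It assigns a binary string (label) $\ell(u)$ to every node $u$. It also labels the edges from each node $u$ to its $\deg(u)$ children with distinct port numbers from $\{1,\dots,\deg(u)\}$; the encoder is free to choose these port numbers. - The decoder receives only $\ell(u)$ and $\ell(w)$ for nodes $u\neq w$ of some $T\in\mathcal{T}$; the value $\lceil\log n\rceil$, where $n=|T|$, may also be assumed known. It must return $0$ if the next node on the path from $u$ to $w$ is the parent of $u$. Otherwise it must return the port number of the first edge on that path. - The length of the scheme is the maximum label length over all trees in $\mathcal{T}$ and all their nodes. A port assignment is canonical if, for every node $v$ with children $v_1,\dots,v_i$ ordered so that $|T_{v_1}|\ge\dots\ge|T_{v_i}|$, the edge from $v$ to $v_j$ gets port $j$. Here $T_v$ denotes the subtree rooted at $v$; ties may be broken arbitrarily. A scheme is canonical if its encoder always produces a canonical port assignment. *)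

(* Defs.v *)
From mathcomp Require Import all_boot.
Set Implicit Arguments. Unset Strict Implicit. Unset Printing Implicit Defensive.

Definition is_rooted_tree (n : nat) (par : 'I_n -> 'I_n) (r : 'I_n) : Prop :=
  par r = r /\ forall u : 'I_n, exists k : nat, iter k par u = r.

(* [anc par v u]: v lies on the path from u to the root (v = u allowed),
   i.e. u belongs to the subtree T_v.  In a tree on n nodes such paths have
   fewer than n edges, so k ranges over 'I_n. *)
Definition anc (n : nat) (par : 'I_n -> 'I_n) (v u : 'I_n) : bool :=
  [exists k : 'I_n, iter k par u == v].

Definition subtree (n : nat) (par : 'I_n -> 'I_n) (v : 'I_n) : {set 'I_n} :=
  [set u | anc par v u].

Definition children (n : nat) (par : 'I_n -> 'I_n) (r v : 'I_n) : {set 'I_n} :=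
  [set u | (u != r) && (par u == v)].

(* Port assignment: [port u] is the port number of the edge from [par u] to
   the child [u] (for u <> r). *)
Definition canonical_ports (n : nat) (par : 'I_n -> 'I_n) (r : 'I_n)
    (port : 'I_n -> nat) : Prop :=
  forall v : 'I_n, exists s : seq 'I_n,
    [/\ perm_eq s (enum (children par r v)),
        sorted (fun a b => #|subtree par b| <= #|subtree par a|) s
      & forall j : nat, j < size s -> port (nth v s j) = j.+1].

(* Correctness of the decoder on a given labeled tree: for u <> w it returns 0
   if the next node on the path from u to w is the parent of u (i.e. w is not
   in T_u), and otherwise the port of the edge from u to the child c of u
   whose subtree contains w. *)
Definition decoder_correct (n : nat) (par : 'I_n -> 'I_n) (r : 'I_n)
    (lab : 'I_n -> seq bool) (port : 'I_n -> nat)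
    (dec : nat -> seq bool -> seq bool -> nat) : Prop :=
  forall u w : 'I_n, u != w ->
    (~~ anc par u w -> dec (up_log 2 n) (lab u) (lab w) = 0) /\
    (forall c : 'I_n, c \in children par r u -> anc par c w ->
        dec (up_log 2 n) (lab u) (lab w) = port c).

(* Main.v *)
Require Import Defs.
From mathcomp Require Import all_boot zify.
Set Implicit Arguments. Unset Strict Implicit. Unset Printing Implicit Defensive.



Lemma ceil_spec y p : 0 < p ->
  let R := ((y + p.-1) %/ p) * p in [/\ y <= R, R < y + p & p %| R].
Proof.
move=> hp R; have hd : p %| R by rewrite /R dvdn_mull.
have := divn_eq (y + p.-1) p; have := ltn_pmod (y + p.-1) hp.
set q := _ %/ _; set rm := _ %% _.
move=> h1 h2; split => //; lia.
Qed.

Lemma div_sub_bound x R p : 0 < p -> x <= R -> R %/ p - x %/ p <= (R - x) %/ p + 1.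
Proof.
move=> hp hxR.
have := divn_eq R p; have := divn_eq x p; have := divn_eq (R - x) p.
have := ltn_pmod R hp; have := ltn_pmod x hp; have := ltn_pmod (R - x) hp.
set a := R %/ p; set b := x %/ p; set c := (R - x) %/ p.
set a' := R %% p; set b' := x %% p; set c' := (R - x) %% p.
move=> h1 h2 h3 h4 h5 h6.
have : a * p <= (b + c + 1) * p + p.-1 by lia.
nia.
Qed.

Section Num.
Variable k : nat.
Hypothesis hk : 0 < k.

Definition ex (m : nat) := trunc_log 2 m - k.
Definition align (x m : nat) := ((x + m + (2 ^ ex m).-1) %/ 2 ^ ex m) * 2 ^ ex m.

Lemma pe_gt0 m : 0 < 2 ^ ex m.
Proof. by rewrite expn_gt0. Qed.

Lemma align_ge x m : x + m <= align x m.
Proof. by case: (ceil_spec (x + m) (pe_gt0 m)). Qed.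
Lemma align_lt x m : align x m < x + m + 2 ^ ex m.
Proof. by case: (ceil_spec (x + m) (pe_gt0 m)). Qed.
Lemma align_dvd x m : 2 ^ ex m %| align x m.
Proof. by case: (ceil_spec (x + m) (pe_gt0 m)). Qed.

Lemma ex_case m : 0 < m -> ex m = 0 \/ 2 ^ ex m * 2 ^ k <= m.
Proof.
move=> hm; rewrite /ex; case: (leqP (trunc_log 2 m) k) => h.
  by left; apply/eqP; rewrite subn_eq0.
right; rewrite -expnD subnK; last exact: ltnW.
exact: trunc_logP.
Qed.

Lemma pe_le m : 0 < m -> 2 ^ ex m <= m.
Proof.
move=> hm; case: (ex_case hm) => [->|h] //.
by apply: leq_trans h; rewrite leq_pmulr // expn_gt0.
Qed.

Definition slotv m := m + (2 ^ ex m).-1.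

Lemma align_slot x m : align x m - x <= slotv m.
Proof. have := align_lt x m; have := pe_gt0 m; rewrite /slotv; lia. Qed.

Lemma slotv_bound m : 0 < m -> slotv m * 2 ^ k <= m * (2 ^ k + 1).
Proof.
move=> hm; have hK : 0 < 2 ^ k by rewrite expn_gt0.
rewrite /slotv; case: (ex_case hm) => [->|h]; first by rewrite expn0 /=; nia.
move: h; have := pe_gt0 m; set p := 2 ^ ex m; set K := 2 ^ k.
nia.
Qed.

Lemma t_bound x m : 0 < m -> align x m %/ 2 ^ ex m - x %/ 2 ^ ex m < 2 ^ k.+2.
Proof.
move=> hm; set p := 2 ^ ex m.
have hp : 0 < p := pe_gt0 m.
have h1 := align_lt x m; have h2 := align_ge x m.
apply: leq_ltn_trans (div_sub_bound hp (leq_trans (leq_addr _ _) h2)) _.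
have hm2 : m < p * 2 ^ k.+1.
  apply: (leq_trans (trunc_log_ltn m (ltnSn 1))).
  rewrite -expnD leq_exp2l // /p /ex; lia.
have : (align x m - x) %/ p < 2 ^ k.+1 + 1.
  rewrite ltn_divLR //; rewrite -/p in h1; nia.
have : 2 ^ k.+1 + 1 < 2 ^ k.+2.
  rewrite !expnS; have : 0 < 2 ^ k by rewrite expn_gt0. lia.
lia.
Qed.

End Num.

Fixpoint bits (w x : nat) : seq bool :=
  if w is w'.+1 then odd x :: bits w' x./2 else [::].
Fixpoint bdec (s : seq bool) : nat :=
  if s is b :: s' then b + (bdec s').*2 else 0.
Fixpoint chunks (f m : nat) (s : seq bool) : seq (seq bool) :=
  if f is f'.+1 then (if s is [::] then [::] else take m s :: chunks f' m (drop m s))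
  else [::].
Fixpoint dlay (x : nat) (ps : seq (nat * nat)) : seq (nat * nat) :=
  if ps is p :: ps' then (x, (x %/ 2 ^ p.1 + p.2) * 2 ^ p.1) :: dlay ((x %/ 2 ^ p.1 + p.2) * 2 ^ p.1) ps'
  else [::].
Fixpoint dend (x : nat) (ps : seq (nat * nat)) : nat :=
  if ps is p :: ps' then dend ((x %/ 2 ^ p.1 + p.2) * 2 ^ p.1) ps' else x.

Definition decW (W F : nat) (su sw : seq bool) : nat :=
  let aw := bdec (take W sw) in
  let au := bdec (take W su) in
  let e := bdec (take F (drop W su)) in
  let t := bdec (take F (drop (W + F) su)) in
  let R := (au %/ 2 ^ e + t) * 2 ^ e in
  let ps := [seq (bdec (take F ch), bdec (drop F ch)) | ch <- chunks (size su) (F + F) (drop (W + F + F) su)] in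
  let ivs := dlay au.+1 ps in
  let i := find (fun iv : nat * nat => (iv.1 <= aw) && (aw < iv.2)) ivs in
  if i < size ivs then i.+2
  else if (dend au.+1 ps <= aw) && (aw < R) then 1 else 0.

Lemma size_bits w x : size (bits w x) = w.
Proof. by elim: w x => //= w IH x; rewrite IH. Qed.

Lemma bdec_bits w x : x < 2 ^ w -> bdec (bits w x) = x.
Proof.
elim: w x => [|w IH] x /=; first by rewrite expn0; case: x.
move=> hx; have hd := odd_double_half x.
rewrite IH; first by rewrite -[in RHS]hd.
move: hx hd; rewrite expnS -!muln2; set h := x./2; set o := odd x; set p := 2 ^ w.
case: o => /=; lia.
Qed.

Lemma chunks_flatten m (xs : seq (seq bool)) f : 0 < m -> all (fun s => size s == m) xs ->
  size xs <= f -> chunks f m (flatten xs) = xs.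
Proof.
move=> hm; elim: xs f => [|x xs IH] [|f] //= /andP [/eqP hx hall] hf.
case ex: (x ++ flatten xs) => [|b s].
  by move: (f_equal size ex); rewrite size_cat hx /=; lia.
rewrite -ex take_size_cat // drop_size_cat // IH //.
Qed.

Definition encW (W F a e t : nat) (ps : seq (nat * nat)) : seq bool :=
  bits W a ++ bits F e ++ bits F t ++ flatten [seq bits F x.1 ++ bits F x.2 | x <- ps].

Lemma size_encW W F a e t ps : size (encW W F a e t ps) = W + F + F + (F + F) * size ps.
Proof.
rewrite /encW !size_cat !size_bits size_flatten /shape -map_comp.
rewrite (eq_map (g := fun _ => F + F)); last by move=> x /=; rewrite size_cat !size_bits.
rewrite sumnE big_map big_const_seq count_predT iter_addn_0; lia.
Qed.

Lemma drop_catD (T : Type) (s1 s2 : seq T) m j : size s1 = m -> drop (m + j) (s1 ++ s2) = drop j s2.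
Proof. by move=> <-; rewrite addnC -drop_drop drop_size_cat. Qed.

Lemma encW_parts W F a e t ps (s := encW W F a e t ps) :
  [/\ take W s = bits W a, take F (drop W s) = bits F e,
      take F (drop (W + F) s) = bits F t &
      drop (W + F + F) s = flatten [seq bits F x.1 ++ bits F x.2 | x <- ps]].
Proof.
have h1 : size (bits W a) = W by rewrite size_bits.
have h2 : size (bits F e) = F by rewrite size_bits.
have h3 : size (bits F t) = F by rewrite size_bits.
rewrite /s /encW; split.
- by rewrite take_size_cat.
- by rewrite drop_size_cat // take_size_cat.
- by rewrite drop_catD // drop_size_cat // take_size_cat.
- by rewrite -addnA drop_catD // drop_catD // drop_size_cat.
Qed.

Lemma decW_eq W F a e t ps sw : 0 < F -> a < 2 ^ W -> e < 2 ^ F -> t < 2 ^ F ->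
  all (fun x => (x.1 < 2 ^ F) && (x.2 < 2 ^ F)) ps ->
  let aw := bdec (take W sw) in
  let R := (a %/ 2 ^ e + t) * 2 ^ e in
  let ivs := dlay a.+1 ps in
  let i := find (fun iv : nat * nat => (iv.1 <= aw) && (aw < iv.2)) ivs in
  decW W F (encW W F a e t ps) sw =
  if i < size ivs then i.+2
  else if (dend a.+1 ps <= aw) && (aw < R) then 1 else 0.
Proof.
move=> hF ha he ht hps aw R ivs i.
have [p1 p2 p3 p4] := encW_parts W F a e t ps.
rewrite /decW p1 p2 p3 p4 !bdec_bits //.
set s := (X in chunks _ _ X).
set ps' := [seq _ | ch <- chunks _ _ _].
have -> : ps' = ps.
  rewrite /ps' /s chunks_flatten; last first.
  - rewrite size_map size_encW; nia.
  - by apply/allP => x /mapP [y _ ->]; rewrite size_cat !size_bits.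
  - lia.
  rewrite -map_comp -[RHS]map_id; apply/eq_in_map => x hx /=.
  have /andP [h1 h2] := allP hps x hx.
  rewrite take_size_cat ?size_bits // drop_size_cat ?size_bits // !bdec_bits //.
  by case: x {hx} h1 h2.
by [].
Qed.

Lemma find_eq (T : Type) (x0 : T) (P : pred T) s i : i < size s -> P (nth x0 s i) ->
  (forall j, j < i -> ~~ P (nth x0 s j)) -> find P s = i.
Proof.
move=> hi hPi hb.
have hs : has P s by apply/(has_nthP x0); exists i.
case: (ltngtP (find P s) i) => // h.
- by have := hb _ h; rewrite nth_find.
- by rewrite before_find in hPi.
Qed.

Lemma find_none (T : Type) (x0 : T) (P : pred T) s :
  (forall j, j < size s -> ~~ P (nth x0 s j)) -> find P s = size s.
Proof.
move=> hb; apply/eqP; rewrite eqn_leq find_size /= leqNgt -has_find.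
by apply/negP => /(has_nthP x0) [j hj hP]; have := hb j hj; rewrite hP.
Qed.

Section Tree.
Variables (n : nat) (par : 'I_n -> 'I_n) (r : 'I_n).
Hypothesis Hroot : par r = r.
Hypothesis Hreach : forall u, exists k, iter k par u = r.

Lemma iter_r k : iter k par r = r.
Proof. exact: iter_fix. Qed.

Lemma depth_lt u : exists2 d, d < n & iter d par u = r.
Proof.
have ex : exists k, iter k par u == r by case: (Hreach u) => k hk; exists k; apply/eqP.
set d := ex_minn ex.
have hd : iter d par u = r by rewrite /d; case: ex_minnP => m /eqP.
have hmin : forall j, iter j par u = r -> d <= j.
  by move=> j hj; rewrite /d; case: ex_minnP => m _ H; apply: H; apply/eqP.
exists d => //.
pose f := fun i : 'I_d.+1 => iter i par u.
have finj : injective f.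
  move=> i j hij; apply/val_inj => /=.
  wlog lij : i j hij / i <= j.
    by move=> H; case: (leqP i j) => h; [apply: H | symmetry; apply: H => //; apply: ltnW].
  apply/eqP; rewrite eqn_leq lij /=; apply/negP => hji.
  have hj : j <= d by rewrite -ltnS ltn_ord.
  have : iter (d - j + i) par u = r.
    by rewrite iterD /f in hij *; rewrite hij -iterD subnK.
  move/hmin; lia.
by have := @leq_card _ _ f finj; rewrite !card_ord.
Qed.

Lemma iter_ge u d m : d <= m -> iter d par u = r -> iter m par u = r.
Proof. by move=> hdm e; rewrite -(subnK hdm) iterD e iter_r. Qed.

Lemma iter_n u : iter n par u = r.
Proof.
case: (depth_lt u) => d hd e.
exact: iter_ge (ltnW hd) e.
Qed.

Lemma ancP v u : reflect (exists k, iter k par u = v) (anc par v u).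
Proof.
apply: (iffP existsP) => [[k /eqP e]|[k e]]; first by exists k.
case: (depth_lt u) => d hd ed.
case: (leqP k d) => hk.
  by exists (Ordinal (leq_ltn_trans hk hd)); rewrite /= e.
exists (Ordinal hd); rewrite /= ed -e.
by rewrite (iter_ge (ltnW hk) ed).
Qed.

Lemma anc_refl u : anc par u u.
Proof. by apply/ancP; exists 0. Qed.

Lemma anc_root u : anc par r u.
Proof. by case: (Hreach u) => k e; apply/ancP; exists k. Qed.

Lemma anc_par v u : anc par v u -> anc par (par v) u.
Proof. by case/ancP => k e; apply/ancP; exists k.+1; rewrite iterS e. Qed.

Lemma anc_trans a b c : anc par a b -> anc par b c -> anc par a c.
Proof. by case/ancP=> i ei /ancP [j ej]; apply/ancP; exists (i + j); rewrite iterD ej. Qed.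

Lemma cycle_root x m : 0 < m -> iter m par x = x -> x = r.
Proof.
move=> hm e; case: (Hreach x) => k ek.
have hk : forall j, iter (m * j) par x = x.
  by elim=> [|j IH]; rewrite ?muln0 // mulnS iterD IH e.
rewrite -(hk k) -(subnK (leq_pmull k hm)) iterD ek iter_r //.
Qed.

Lemma child_anc c u : c \in children par r u -> anc par u c.
Proof. by rewrite inE => /andP [_ /eqP e]; apply/ancP; exists 1. Qed.

Lemma child_not_anc c u : c \in children par r u -> ~~ anc par c u.
Proof.
rewrite inE => /andP [cr /eqP e]; apply/negP => /ancP [k ek].
have : iter k.+1 par c = c by rewrite iterSr e.
move/(cycle_root (ltn0Sn k)) => cr'; by rewrite cr' eqxx in cr.
Qed.

Lemma anc_child u w : anc par u w -> u != w ->
  exists2 c, c \in children par r u & anc par c w.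
Proof.
move=> /ancP hk uw.
have ex : exists k, iter k par w == u by case: hk => k e; exists k; apply/eqP.
set k := ex_minn ex.
have hd : iter k par w = u by rewrite /k; case: ex_minnP => m /eqP.
have hmin : forall j, iter j par w = u -> k <= j.
  by move=> j hj; rewrite /k; case: ex_minnP => m _ H; apply: H; apply/eqP.
case: k hd hmin => [|k] hd hmin; first by rewrite /= in hd; rewrite hd eqxx in uw.
exists (iter k par w); last by apply/ancP; exists k.
rewrite inE -iterS hd eqxx andbT; apply/negP => /eqP e.
have : iter k par w = u by rewrite -hd iterS e Hroot.
by move/hmin; rewrite ltnn.
Qed.

Lemma sib_disj u c c' w : c \in children par r u -> c' \in children par r u ->
  anc par c w -> anc par c' w -> c = c'.
Proof.
move=> hc hc' /ancP [i ei] /ancP [j ej].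
wlog lij : i j c c' hc hc' ei ej / i <= j.
  move=> H; case: (leqP i j) => h; first exact: (H i j c c').
  by symmetry; exact: (H j i c' c hc' hc ej ei (ltnW h)).
have [hij|eij] : i < j \/ i = j by lia.
2: by subst j; rewrite -ei -ej.
move: hc hc'; rewrite !inE => /andP [cr /eqP pc] /andP [cr' /eqP pc'].
have e1 : iter (j - i) par c = c' by rewrite -ei -iterD subnK // ltnW.
have : iter (j - i) par u = u.
  have -> : iter (j - i) par u = par (iter (j - i) par c) by rewrite -iterS iterSr pc.
  by rewrite e1 pc'.
move/(cycle_root); rewrite subn_gt0 => /(_ hij) ur.
move: e1; have : j - i = (j - i).-1.+1 by rewrite prednK // subn_gt0.
move=> hh; rewrite hh iterSr pc ur iter_r => er.
by rewrite er eqxx in cr'.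
Qed.


Definition sz (v : 'I_n) := #|subtree par v|.
Definition szle : rel 'I_n := fun a b => sz b <= sz a.
Definition sch (v : 'I_n) : seq 'I_n := sort szle (enum (children par r v)).
Definition port (c : 'I_n) : nat := (index c (sch (par c))).+1.

Lemma szle_total : total szle.
Proof. by move=> a b; rewrite /szle leq_total. Qed.
Lemma szle_trans : transitive szle.
Proof. by move=> a b c; rewrite /szle => h1 h2; apply: leq_trans h2 h1. Qed.

Lemma sch_uniq v : uniq (sch v).
Proof. by rewrite sort_uniq enum_uniq. Qed.

Lemma mem_sch v c : (c \in sch v) = (c \in children par r v).
Proof. by rewrite mem_sort mem_enum. Qed.

Lemma canonical_port : canonical_ports par r port.
Proof.
move=> v; exists (sch v); split.
- by rewrite /sch perm_sort.
- exact: (sort_sorted szle_total (enum (children par r v))).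
move=> j hj; rewrite /port.
have hin : nth v (sch v) j \in children par r v by rewrite -mem_sch mem_nth.
move: (hin); rewrite inE => /andP [_ /eqP ->].
by rewrite index_uniq // sch_uniq.
Qed.

Lemma in_subtree v u : (u \in subtree par v) = anc par v u.
Proof. by rewrite inE. Qed.

Lemma sz_gt0 v : 0 < sz v.
Proof. by apply/card_gt0P; exists v; rewrite in_subtree anc_refl. Qed.

Lemma sz_le_n v : sz v <= n.
Proof. by have := max_card (subtree par v); rewrite card_ord. Qed.

Lemma sum_children u : \sum_(c <- sch u) sz c < sz u.
Proof.
rewrite /sch (perm_big _ (permEl (perm_sort _ _))) big_enum /=.
rewrite /sz.
under eq_bigr => c _ do rewrite -sum1_card big_mkcond /=.
rewrite exchange_big /=.
rewrite -sum1_card [X in _ < X]big_mkcond /=.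
rewrite (bigD1 u) /=; last by [].
rewrite big1; last by move=> c hc; rewrite in_subtree (negbTE (child_not_anc hc)).
rewrite [X in _ < X](bigD1 u) //= in_subtree anc_refl.
rewrite add0n add1n ltnS; apply: leq_sum => w hw.
case: (boolP (anc par u w)) => huw; last first.
  rewrite in_subtree (negbTE huw) big1 // => c hc.
  rewrite in_subtree; case: ifP => // hcw; case/negP: huw.
  exact: anc_trans (child_anc hc) hcw.
rewrite in_subtree huw.
have uw : u != w by rewrite eq_sym.
case: (anc_child huw uw) => c0 hc0 hc0w.
rewrite (bigD1 c0) //= in_subtree hc0w big1 // => c /andP [hc hcc0].
rewrite in_subtree; case: ifP => // hcw.
by rewrite (sib_disj hc hc0 hcw hc0w) eqxx in hcc0.
Qed.

Lemma light_small u h ls c : sch u = h :: ls -> c \in ls -> (sz c).*2 < sz u.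
Proof.
move=> e hc; have := sum_children u; rewrite e big_cons.
have hu : uniq ls by have := sch_uniq u; rewrite e => /andP [].
rewrite (bigD1_seq c hc hu) /=.
have : szle h c.
  have := sort_sorted szle_total (enum (children par r u)); rewrite -/(sch u) e /=.
  by move/(order_path_min szle_trans)/allP/(_ c hc).
rewrite /szle => hhc; rewrite -addnn; lia.
Qed.

Lemma child_sz c u : c \in children par r u -> sz c < sz u.
Proof.
move=> hc; rewrite /sz; apply: proper_card; apply/properP; split.
  apply/subsetP => w; rewrite !in_subtree => hw.
  exact: anc_trans (child_anc hc) hw.
by exists u; rewrite !in_subtree ?anc_refl // (negbTE (child_not_anc hc)).
Qed.

Variable k : nat.
Hypothesis hk : 0 < k.

Fixpoint ndf (f : nat) (u : 'I_n) : nat :=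
  if f is f'.+1 then
    match sch u with
    | [::] => 1
    | h :: ls => 1 + \sum_(c <- ls) (slotv k (ndf f' c)) + ndf f' h
    end
  else 0.

Lemma ndf_stable f g u : sz u <= f -> sz u <= g -> ndf f u = ndf g u.
Proof.
elim: f g u => [|f IH] g u hf hg; first by have := sz_gt0 u; lia.
case: g hg => [|g] hg; first by have := sz_gt0 u; lia.
rewrite /=; case e: (sch u) => [|h ls] //.
have hc : forall c, c \in sch u -> sz c <= f /\ sz c <= g.
  move=> c; rewrite mem_sch => /child_sz hc; lia.
rewrite (IH g h); last 2 first.
- by case: (hc h); rewrite ?e ?mem_head.
- by case: (hc h); rewrite ?e ?mem_head.
congr (_ + _ + _); apply: eq_big_seq => c hcl.
have : c \in sch u by rewrite e inE hcl orbT.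
by case/hc => h1 h2; rewrite (IH g c).
Qed.

Definition nd (u : 'I_n) := ndf n u.

Lemma nd_eq u : nd u =
  match sch u with
  | [::] => 1
  | h :: ls => 1 + \sum_(c <- ls) (slotv k (nd c)) + nd h
  end.
Proof.
have hn := sz_le_n u.
have hn0 : 0 < n by have := sz_gt0 u; lia.
rewrite /nd; have -> : ndf n u = ndf n.-1.+1 u by rewrite prednK.
rewrite /=; case e: (sch u) => [|h ls] //.
have hc : forall c, c \in sch u -> sz c <= n.-1.
  move=> c; rewrite mem_sch => /child_sz hc; lia.
have hcn : forall c, sz c <= n by move=> c; rewrite sz_le_n.
rewrite (ndf_stable (g := n) (hc h _) (hcn h)); last by rewrite e mem_head.
congr (_ + _ + _); apply: eq_big_seq => c hcl.
rewrite (ndf_stable (g := n) (hc c _) (hcn c)) //.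
by rewrite e inE hcl orbT.
Qed.

Hypothesis hB : (trunc_log 2 n).*2 <= 2 ^ k.

Lemma nd_gt0 u : 0 < nd u.
Proof. by rewrite nd_eq; case: (sch u) => // h ls; rewrite -addnA. Qed.

Lemma nd_bound u :
  nd u * 2 ^ k <= sz u * (2 ^ k + (trunc_log 2 (sz u)).*2).
Proof.
move: {2}(sz u) (leqnn (sz u)) => f; elim: f u => [|f IH] u hf.
  by have := sz_gt0 u; lia.
set B := 2 ^ k; have hB0 : 0 < B by rewrite expn_gt0.
set X := B + (trunc_log 2 (sz u)).*2.
rewrite nd_eq; case e: (sch u) => [|h ls].
  by have := sz_gt0 u; rewrite /X; nia.
have hsum := sum_children u; rewrite e big_cons in hsum.
have hjn : forall v, trunc_log 2 (sz v) <= trunc_log 2 n.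
  by move=> v; apply: leq_trunc_log; apply: sz_le_n.
have hh : h \in children par r u by rewrite -mem_sch e mem_head.
have hhs := child_sz hh.
have IHh : nd h * B <= sz h * X.
  apply: leq_trans (IH h _) _; first lia.
  apply: leq_mul => //; rewrite leq_add2l leq_double.
  by apply: leq_trunc_log; apply: ltnW.
have hl : forall c, c \in ls -> slotv k (nd c) * B <= sz c * X.
  move=> c hc.
  have hcc : c \in children par r u by rewrite -mem_sch e inE hc orbT.
  have hcs := child_sz hcc.
  have hsmall := light_small e hc.
  have hj : (trunc_log 2 (sz c)).+1 <= trunc_log 2 (sz u).
    rewrite -trunc_log2_double ?sz_gt0 //; apply: leq_trunc_log; exact: ltnW.
  have IHc' : nd c * B <= sz c * (B + (trunc_log 2 (sz c)).*2).
    apply: IH; lia.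
  have hs := slotv_bound hk (nd_gt0 c).
  have hjc := hjn c.
  rewrite -/B in hs IHc'.
  move: hs IHc' hj hjc hB; rewrite /X -/B.
  set jc := trunc_log 2 (sz c); set ju := trunc_log 2 (sz u); set jn := trunc_log 2 n.
  set s := slotv k (nd c); set d := nd c; set z := sz c.
  move=> hs IHc' hj hjc hB'.
  have h1 : s * B * B <= z * (B + jc.*2) * (B + 1).
    apply: leq_trans (leq_mul hs (leqnn B)) _.
    rewrite mulnAC; apply: leq_mul (leqnn _); exact: IHc'.
  have h2 : (B + jc.*2) * (B + 1) <= B * (B + ju.*2).
    rewrite -!addnn in hj hjc hB' *; nia.
  have : s * B * B <= z * B * (B + ju.*2).
    apply: leq_trans h1 _; rewrite -mulnA -mulnA leq_mul2l; apply/orP; right; exact: h2.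
  have -> : z * B * (B + ju.*2) = z * (B + ju.*2) * B by rewrite mulnAC.
  by rewrite leq_pmul2r.
have hL : \sum_(c <- ls) slotv k (nd c) * B <= (\sum_(c <- ls) sz c) * X.
  rewrite big_distrl /= big_seq [X in _ <= X]big_seq; apply: leq_sum => c hc; exact: hl.
rewrite -big_distrl /= in hL; rewrite !mulnDl.
have hX : B <= X by rewrite /X leq_addr.
nia.
Qed.

Fixpoint lay (x : nat) (l : seq 'I_n) : seq (nat * nat) :=
  if l is c :: l' then (x, align k x (nd c)) :: lay (align k x (nd c)) l' else [::].
Fixpoint lend (x : nat) (l : seq 'I_n) : nat :=
  if l is c :: l' then lend (align k x (nd c)) l' else x.
Fixpoint lpairs (x : nat) (l : seq 'I_n) : seq (nat * nat) :=
  if l is c :: l' then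
    (ex k (nd c), align k x (nd c) %/ 2 ^ ex k (nd c) - x %/ 2 ^ ex k (nd c))
      :: lpairs (align k x (nd c)) l'
  else [::].

Lemma lend_cat x s1 s2 : lend x (s1 ++ s2) = lend (lend x s1) s2.
Proof. by elim: s1 x => //= c s1 IH x. Qed.

Lemma lend_ge x l : x <= lend x l.
Proof.
elim: l x => //= c l IH x; apply: leq_trans (IH _).
exact: leq_trans (leq_addr _ _) (align_ge _ _ _).
Qed.

Lemma lend_le x l : lend x l <= x + \sum_(c <- l) slotv k (nd c).
Proof.
elim: l x => [|c l IH] x /=; first by rewrite big_nil addn0.
rewrite big_cons; apply: leq_trans (IH _) _.
have := align_slot hk x (nd c); have := lend_ge x [::].
have := align_ge k x (nd c); lia.
Qed.

Lemma lend_take_mono x l i j : i <= j -> lend x (take i l) <= lend x (take j l).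
Proof.
move=> hij; rewrite -[take j l](cat_take_drop i) lend_cat take_takel //.
exact: lend_ge.
Qed.

Lemma lend_take_le x l i : lend x (take i l) <= lend x l.
Proof. by rewrite -[in X in _ <= X](cat_take_drop i l) lend_cat lend_ge. Qed.

Lemma lend_takeS x l i : i < size l ->
  lend x (take i.+1 l) = align k (lend x (take i l)) (nd (nth r l i)).
Proof. by move=> hi; rewrite (take_nth r hi) -cats1 lend_cat. Qed.

Lemma nth_lay x l i : i < size l ->
  nth (0, 0) (lay x l) i = (lend x (take i l), lend x (take i.+1 l)).
Proof.
elim: l x i => [|c l IH] x [|i] //= hi; first by rewrite take0.
by rewrite IH.
Qed.

Definition Rroot := align k 0 (nd r).

Definition childpos (p : nat * nat * nat) (v c : 'I_n) : nat * nat * nat :=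
  match sch v with
  | [::] => p
  | h :: ls =>
      if c == h then (lend p.1.1.+1 ls, p.1.2, p.2)
      else let iv := nth (0, 0) (lay p.1.1.+1 ls) (index c ls) in
           (iv.1, iv.2, ex k (nd c))
  end.

Definition rootpos : nat * nat * nat := (0, Rroot, ex k (nd r)).

Fixpoint posf (f : nat) (u : 'I_n) : nat * nat * nat :=
  if f is f'.+1 then
    if u == r then rootpos else childpos (posf f' (par u)) (par u) u
  else rootpos.

Definition pos u := posf n u.

Lemma posf_stable m u : iter m par u = r -> posf m u = posf m.+1 u.
Proof.
elim: m u => [|m IH] u /=; first by move=> ->; rewrite eqxx.
case: eqP => // _ e; congr childpos; apply: IH; by rewrite -iterSr.
Qed.

Lemma pos_root : pos r = rootpos.
Proof. by rewrite /pos; case: n => //= n'; rewrite eqxx. Qed.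

Lemma pos_eq u : u != r -> pos u = childpos (pos (par u)) (par u) u.
Proof.
by move=> ur; rewrite /pos posf_stable ?iter_n //= (negbTE ur).
Qed.

Definition inv3 (p : nat * nat * nat) (m : nat) : Prop :=
  [/\ p.1.1 + m <= p.1.2, 2 ^ p.2 %| p.1.2,
      p.1.2 %/ 2 ^ p.2 - p.1.1 %/ 2 ^ p.2 < 2 ^ k.+2,
      2 ^ p.2 <= p.1.2 & p.1.2 <= Rroot].

Lemma inv_root : inv3 rootpos (nd r).
Proof.
rewrite /inv3 /rootpos /Rroot /=; split => //.
- exact: align_ge.
- exact: align_dvd.
- by have := t_bound hk 0 (nd_gt0 r); rewrite div0n.
- apply: leq_trans (pe_le k (nd_gt0 r)) _.
  exact: leq_trans (leq_addl _ _) (align_ge _ _ _).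
Qed.

Lemma sch_split v c : c \in children par r v ->
  exists h ls, sch v = h :: ls /\ (c = h \/ (c \in ls /\ c != h)).
Proof.
rewrite -mem_sch; case e: (sch v) => [|h ls] // hc.
exists h, ls; split => //.
case: (eqVneq c h) => [->|hch]; [by left | right].
by move: hc; rewrite inE (negbTE hch).
Qed.

Lemma heavy_room p v h ls : sch v = h :: ls -> inv3 p (nd v) ->
  lend p.1.1.+1 ls + nd h <= p.1.2.
Proof.
move=> e [h1 _ _ _ _]; move: h1; rewrite nd_eq e => h1.
have := lend_le p.1.1.+1 ls; lia.
Qed.

Lemma light_pos (p : nat * nat * nat) (ls : seq 'I_n) c : c \in ls ->
  let i := index c ls in
  nth (0, 0) (lay p.1.1.+1 ls) i =
    (lend p.1.1.+1 (take i ls), align k (lend p.1.1.+1 (take i ls)) (nd c)).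
Proof.
move=> hc i; have hi : i < size ls by rewrite index_mem.
by rewrite nth_lay // lend_takeS // nth_index.
Qed.

Lemma child_inv p v c : c \in children par r v -> inv3 p (nd v) ->
  let q := childpos p v c in
  [/\ inv3 q (nd c), p.1.1 < q.1.1 & q.1.2 <= p.1.2].
Proof.
move=> hcv hp; have [h [ls [e hc]]] := sch_split hcv.
have hroom := heavy_room e hp.
case: hp => [h1 h2 h3 h4 h5].
rewrite /childpos e.
case: hc => [->|[hcl hch]].
  rewrite eqxx /=; have hge := lend_ge p.1.1.+1 ls.
  split; [split|by []|by []] => //=.
  all: try lia.
  by apply: leq_ltn_trans h3; apply: leq_sub2l; apply: leq_div2r; lia.
rewrite (negbTE hch) (light_pos p hcl) /=.
set i := index c ls; set x := lend p.1.1.+1 (take i ls).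
have hx1 : p.1.1.+1 <= x by apply: lend_ge.
have hx2 : align k x (nd c) <= lend p.1.1.+1 ls.
  have hi : i < size ls by rewrite index_mem.
  have -> : align k x (nd c) = lend p.1.1.+1 (take i.+1 ls) by rewrite /x lend_takeS ?nth_index.
  exact: lend_take_le.
have hRl : align k x (nd c) <= p.1.2 by lia.
split; [split|by []|by []] => //=.
- exact: align_ge.
- exact: align_dvd.
- by apply: (t_bound hk); apply: nd_gt0.
- exact: leq_trans (pe_le k (nd_gt0 c)) (leq_trans (leq_addl _ _) (align_ge _ _ _)).
- exact: leq_trans hRl h5.
Qed.

Lemma child_disj p v c c' : c \in children par r v -> c' \in children par r v ->
  c != c' -> inv3 p (nd v) ->
  (childpos p v c).1.2 <= (childpos p v c').1.1 \/
  (childpos p v c').1.2 <= (childpos p v c).1.1.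
Proof.
move=> hcv hcv' hcc hp.
have [h [ls [e hc]]] := sch_split hcv.
have [h' [ls' [e' hc']]] := sch_split hcv'.
rewrite e in e'; case: e' => <- <- in hc'.
have hroom := heavy_room e hp.
rewrite /childpos e.
have lightR : forall d, d \in ls -> d != h ->
  (nth (0, 0) (lay p.1.1.+1 ls) (index d ls)).2 <= lend p.1.1.+1 ls.
  move=> d hdl _; rewrite (light_pos p hdl) /=.
  have hi : index d ls < size ls by rewrite index_mem.
  rewrite -{2}(nth_index r hdl) -lend_takeS //; apply: lend_take_le.
case: hc => [Ec|[hcl hch]]; case: hc' => [Ec'|[hcl' hch']].
- by rewrite Ec Ec' eqxx in hcc.
- rewrite Ec eqxx (negbTE hch') /=; right; exact: lightR.
- rewrite Ec' eqxx (negbTE hch) /=; left; exact: lightR.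
rewrite (negbTE hch) (negbTE hch') (light_pos p hcl) (light_pos p hcl') /=.
have hii : index c ls != index c' ls.
  by apply: contra hcc => /eqP hh; rewrite -(nth_index r hcl) hh nth_index.
have hi : index c ls < size ls by rewrite index_mem.
have hi' : index c' ls < size ls by rewrite index_mem.
have -> : align k (lend p.1.1.+1 (take (index c ls) ls)) (nd c) =
  lend p.1.1.+1 (take (index c ls).+1 ls) by rewrite lend_takeS ?nth_index.
have -> : align k (lend p.1.1.+1 (take (index c' ls) ls)) (nd c') =
  lend p.1.1.+1 (take (index c' ls).+1 ls) by rewrite lend_takeS ?nth_index.
case: (ltngtP (index c ls) (index c' ls)) => hlt.
- by left; apply: lend_take_mono.
- by right; apply: lend_take_mono.
- by rewrite hlt eqxx in hii.
Qed.

Definition pa u := (pos u).1.1.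
Definition pR u := (pos u).1.2.
Definition pe u := (pos u).2.

Lemma child_of_par u : u != r -> u \in children par r (par u).
Proof. by move=> ur; rewrite inE ur eqxx. Qed.

Lemma pos_inv u : inv3 (pos u) (nd u).
Proof.
case: (Hreach u) => m; elim: m u => [|m IH] u.
  by move=> /= ->; rewrite pos_root; apply: inv_root.
case: (eqVneq u r) => [->|ur] e; first by rewrite pos_root; apply: inv_root.
rewrite pos_eq //; rewrite iterSr in e.
by case: (child_inv (child_of_par ur) (IH (par u) e)).
Qed.

Lemma pos_nest u : u != r -> pa (par u) < pa u /\ pR u <= pR (par u).
Proof.
move=> ur; rewrite /pa /pR (pos_eq ur).
by case: (child_inv (child_of_par ur) (pos_inv (par u))).
Qed.

Lemma pa_lt_pR u : pa u < pR u.
Proof. by case: (pos_inv u) => h1 _ _ _ _; have := nd_gt0 u; rewrite /pa /pR; lia. Qed.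

Lemma pos_child v c : c \in children par r v -> pos c = childpos (pos v) v c.
Proof.
rewrite inE => /andP [cr /eqP pc]; by rewrite pos_eq // pc.
Qed.

Lemma pos_disj v c c' : c \in children par r v -> c' \in children par r v -> c != c' ->
  pR c <= pa c' \/ pR c' <= pa c.
Proof.
move=> hc hc' hcc; rewrite /pR /pa (pos_child hc) (pos_child hc').
exact: child_disj hc hc' hcc (pos_inv v).
Qed.

Lemma anc_in c w : anc par c w -> pa c <= pa w < pR c.
Proof.
case/ancP => j <-.
have : pa (iter j par w) <= pa w /\ pR w <= pR (iter j par w).
  elim: j => [|j [IH1 IH2]] //=.
  case: (eqVneq (iter j par w) r) => [e|ne]; first by rewrite e Hroot -e.
  have [h1 h2] := pos_nest ne; split; lia.
case=> h1 h2; have := pa_lt_pR w; lia.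
Qed.

Lemma in_anc u w : pa u <= pa w < pR u -> anc par u w.
Proof.
case: (Hreach u) => m; elim: m u => [|m IH] u.
  by move=> /= -> _; apply: anc_root.
case: (eqVneq u r) => [->|ur] e hin; first exact: anc_root.
rewrite iterSr in e.
have [n1 n2] := pos_nest ur.
have hp : anc par (par u) w by apply: (IH _ e); lia.
have pw : par u != w by apply/eqP => pwE; rewrite -pwE in hin; lia.
case: (anc_child hp pw) => c hc hcw.
case: (eqVneq c u) => [cu'|cu]; first by rewrite -cu'.
have := anc_in hcw.
case: (pos_disj hc (child_of_par ur) cu) => h; lia.
Qed.

Lemma Rroot_bound : Rroot <= (2 ^ up_log 2 n).*2.*2.
Proof.
have hr := nd_bound r.
have hn : n <= 2 ^ up_log 2 n by apply: up_logP.
have hj : trunc_log 2 (sz r) <= trunc_log 2 n by apply: leq_trunc_log; apply: sz_le_n.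
have hs := sz_le_n r.
have hK : 0 < 2 ^ k by rewrite expn_gt0.
have hnd : nd r <= n.*2.
  rewrite -(leq_pmul2r hK); apply: leq_trans hr _.
  move: hB hj hs; set K := 2 ^ k; set a := trunc_log 2 _; set b := trunc_log 2 _.
  rewrite -!addnn; nia.
have := align_lt k 0 (nd r); have := pe_le k (nd_gt0 r); rewrite /Rroot.
rewrite -!addnn in hnd *; lia.
Qed.

Hypothesis hkL : up_log 2 n <= 2 ^ k.

Definition Wd := (up_log 2 n).+2.
Definition Fd := k.+2.

Definition lab (u : 'I_n) : seq bool :=
  encW Wd Fd (pa u) (pe u) (pR u %/ 2 ^ pe u - pa u %/ 2 ^ pe u)
       (lpairs (pa u).+1 (behead (sch u))).

Lemma recomp x A p : 0 < p -> p %| A -> x <= A -> (x %/ p + (A %/ p - x %/ p)) * p = A.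
Proof. by move=> hp hd hxA; rewrite subnKC ?divnK // leq_div2r. Qed.

Lemma dlay_lpairs x l : dlay x (lpairs x l) = lay x l /\ dend x (lpairs x l) = lend x l.
Proof.
elim: l x => [|c l IH] x //=.
have -> : (x %/ 2 ^ ex k (nd c) + (align k x (nd c) %/ 2 ^ ex k (nd c) - x %/ 2 ^ ex k (nd c)))
   * 2 ^ ex k (nd c) = align k x (nd c).
  apply: recomp; [exact: pe_gt0 | exact: align_dvd |].
  exact: leq_trans (leq_addr _ _) (align_ge _ _ _).
by case: (IH (align k x (nd c))) => -> ->.
Qed.

Lemma pR_le u : pR u <= 2 ^ Wd.
Proof.
case: (pos_inv u) => _ _ _ _ h5; apply: leq_trans h5 _.
apply: leq_trans Rroot_bound _.
by rewrite /Wd !expnS -!muln2; lia.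
Qed.

Lemma small_exp e : 2 ^ e <= 2 ^ Wd -> e < 2 ^ Fd.
Proof.
rewrite leq_exp2l // => he.
have : up_log 2 n + 2 < 2 ^ Fd.
  rewrite /Fd !expnS; have : 0 < 2 ^ k by rewrite expn_gt0. lia.
rewrite /Wd in he; lia.
Qed.

Lemma lpairs_ok x l : (forall c, c \in l -> nd c <= 2 ^ Wd) ->
  all (fun p => (p.1 < 2 ^ Fd) && (p.2 < 2 ^ Fd)) (lpairs x l).
Proof.
elim: l x => [|c l IH] x //= hl; apply/andP; split.
  apply/andP; split.
    by apply: small_exp; apply: leq_trans (pe_le k (nd_gt0 c)) (hl c (mem_head _ _)).
  by apply: (t_bound hk); apply: nd_gt0.
by apply: IH => d hd; apply: hl; rewrite inE hd orbT.
Qed.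

Lemma lab_dec u sw :
  let aw := bdec (take Wd sw) in
  let ivs := lay (pa u).+1 (behead (sch u)) in
  let i := find (fun iv : nat * nat => (iv.1 <= aw) && (aw < iv.2)) ivs in
  decW Wd Fd (lab u) sw =
  if i < size ivs then i.+2
  else if (lend (pa u).+1 (behead (sch u)) <= aw) && (aw < pR u) then 1 else 0.
Proof.
move=> aw ivs i; rewrite /lab decW_eq //.
- case: (dlay_lpairs (pa u).+1 (behead (sch u))) => -> ->.
  by rewrite recomp //; [exact: expn_gt0 | case: (pos_inv u) | exact: ltnW (pa_lt_pR u)].
- by exact: leq_trans (pa_lt_pR u) (pR_le u).
- by apply: small_exp; case: (pos_inv u) => _ _ _ h4 _; apply: leq_trans h4 (pR_le u).
- by case: (pos_inv u).
- apply: lpairs_ok => c hc.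
  have hcc : c \in children par r u.
    by rewrite -mem_sch; case: (sch u) hc => //= h ls hc; rewrite inE hc orbT.
  case: (pos_inv c) => h1 _ _ _ _.
  apply: leq_trans (pR_le c); rewrite /pR; lia.
Qed.

Lemma lab_aw w : bdec (take Wd (lab w)) = pa w.
Proof.
rewrite /lab; case: (encW_parts Wd Fd (pa w) (pe w)
  (pR w %/ 2 ^ pe w - pa w %/ 2 ^ pe w) (lpairs (pa w).+1 (behead (sch w)))) => -> _ _ _.
by rewrite bdec_bits //; exact: leq_trans (pa_lt_pR w) (pR_le w).
Qed.

Lemma ivs_nth u h ls j : sch u = h :: ls -> j < size ls ->
  nth (0, 0) (lay (pa u).+1 ls) j = (pa (nth r ls j), pR (nth r ls j)).
Proof.
move=> e hj.
have hu := sch_uniq u; rewrite e /= in hu; case/andP: hu => hnot hu.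
set c := nth r ls j.
have hcl : c \in ls by apply: mem_nth.
have hcv : c \in children par r u by rewrite -mem_sch e inE hcl orbT.
have hch : c != h by apply: contraNneq hnot => <-.
rewrite /pa /pR (pos_child hcv) /childpos e (negbTE hch) /=.
by rewrite /c index_uniq //; case: (nth _ _ _).
Qed.

Lemma heavy_pos u h ls : sch u = h :: ls ->
  pa h = lend (pa u).+1 ls /\ pR h = pR u.
Proof.
move=> e; have hcv : h \in children par r u by rewrite -mem_sch e mem_head.
by rewrite /pa /pR (pos_child hcv) /childpos e eqxx.
Qed.

Lemma size_lay x l : size (lay x l) = size l.
Proof. by elim: l x => //= c l IH x; rewrite IH. Qed.

Lemma child_nest u c : c \in children par r u -> pa u < pa c /\ pR c <= pR u.
Proof.
rewrite inE => /andP [cr /eqP pc]; rewrite -pc; exact: pos_nest.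
Qed.

Lemma dec_correct u w : u != w ->
  (~~ anc par u w -> decW Wd Fd (lab u) (lab w) = 0) /\
  (forall c, c \in children par r u -> anc par c w -> decW Wd Fd (lab u) (lab w) = port c).
Proof.
move=> uw; rewrite lab_dec lab_aw.
case e: (sch u) => [|h ls] /=.
  split => [hna|c]; last by rewrite -mem_sch e.
  have hnot : ~~ (pa u <= pa w < pR u) by apply: contra hna; apply: in_anc.
  by case: ifP => //; move: hnot; lia.
have hu := sch_uniq u; rewrite e /= in hu; case/andP: hu => hnot hu.
have hchild : forall j, j < size ls -> nth r ls j \in children par r u.
  by move=> j hj; rewrite -mem_sch e inE mem_nth ?orbT.
have [hha hhR] := heavy_pos e.
have hhc : h \in children par r u by rewrite -mem_sch e mem_head.
split.
  move=> hna.
  have hout : ~~ (pa u <= pa w < pR u) by apply: contra hna; apply: in_anc.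
  rewrite (@find_none _ (0, 0)); last first.
    move=> j; rewrite size_lay => hj; rewrite (ivs_nth e) //=.
    have [n1 n2] := child_nest (hchild j hj).
    move: hout; lia.
  rewrite size_lay ltnn -hha -hhR.
  have [n1 n2] := child_nest hhc.
  by case: ifP => //; move: hout; lia.
move=> c hc hcw; have hin := anc_in hcw.
rewrite /port; have -> : par c = u by move: hc; rewrite inE => /andP [_ /eqP].
rewrite e.
case: (eqVneq c h) => [ech|nch].
  subst c; rewrite /= eqxx.
  rewrite (@find_none _ (0, 0)); last first.
    move=> j; rewrite size_lay => hj; rewrite (ivs_nth e) //=.
    have hjn : nth r ls j != h by apply: contraNneq hnot => <-; apply: mem_nth.
    case: (pos_disj (hchild j hj) hhc hjn) => hd; move: hin; lia.
  by rewrite size_lay ltnn -hha -hhR; move: hin; case: ifP => //; lia.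
have hcl : c \in ls by move: hc; rewrite -mem_sch e inE (negbTE nch).
rewrite /= eq_sym (negbTE nch) /=.
have hi : index c ls < size ls by rewrite index_mem.
rewrite (@find_eq _ (0, 0) _ _ (index c ls)) ?size_lay ?hi //.
- by rewrite (ivs_nth e) // nth_index.
- move=> j hj; have hjs : j < size ls by apply: ltn_trans hi.
  rewrite (ivs_nth e) //=.
  have hjn : nth r ls j != c.
    apply/eqP => hh; have := index_uniq r hjs hu; rewrite hh => hh'.
    by rewrite hh' ltnn in hj.
  case: (pos_disj (hchild j hjs) hc hjn) => hd; move: hin; lia.
Qed.

End Tree.

Lemma size_lpairs n (par : 'I_n -> 'I_n) r k x l : size (lpairs par r k x l) = size l.
Proof. by elim: l x => //= c l IH x; rewrite IH. Qed.

Lemma size_sch n (par : 'I_n -> 'I_n) r v : size (sch par r v) = #|children par r v|.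
Proof. by rewrite /sch size_sort -cardE. Qed.

Lemma tl_le_ul m : trunc_log 2 m <= up_log 2 m.
Proof.
case: m => [|m]; first by rewrite trunc_log0.
rewrite -(leq_exp2l _ _ (ltnSn 1)).
exact: leq_trans (trunc_logP (ltnSn 1) (ltn0Sn m)) (up_logP _ (ltnSn 1)).
Qed.

Theorem mainTheorem1 (Delta : nat) (hDelta : 1 <= Delta) :
  exists (C N0 : nat)
         (enc : forall n : nat, ('I_n -> 'I_n) -> 'I_n ->
                  ('I_n -> seq bool) * ('I_n -> nat))
         (dec : nat -> seq bool -> seq bool -> nat),
    forall (n : nat) (par : 'I_n -> 'I_n) (r : 'I_n),
      is_rooted_tree par r ->
      (forall v : 'I_n, #|children par r v| <= Delta) ->
      [/\ canonical_ports par r (enc n par r).2,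
          decoder_correct par r (enc n par r).1 (enc n par r).2 dec
        & N0 <= n -> forall u : 'I_n,
            size ((enc n par r).1 u) <= up_log 2 n + C * up_log 2 (up_log 2 n)].
Proof.
exists (2 + 8 * Delta), 3.
exists (fun n par r => (lab par r (up_log 2 (up_log 2 n)).+1, port par r)).
exists (fun L su sw => decW L.+2 (up_log 2 L).+3 su sw).
move=> n par r [Hroot Hreach] hdeg.
set L := up_log 2 n; set k := (up_log 2 L).+1.
have hk : 0 < k by [].
have hLk : L <= 2 ^ up_log 2 L by apply: up_logP.
have hkL : L <= 2 ^ k by rewrite /k expnS; lia.
have hB : (trunc_log 2 n).*2 <= 2 ^ k.
  have := tl_le_ul n; rewrite -/L /k expnS -addnn; lia.
split => /=.
- exact: canonical_port.
- move=> u w uw.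
  have := dec_correct Hroot Hreach hk hB hkL uw.
  by rewrite /Wd /Fd /k.
move=> hn u.
change (size (lab par r k u) <= L + (2 + 8 * Delta) * up_log 2 L).
rewrite /lab size_encW size_lpairs size_behead size_sch /Wd /Fd -/L -/k.
have hd := hdeg u.
have hL2 : 2 <= L.
  rewrite /L; have := up_logP n (ltnSn 1); case: (up_log 2 n) => [|[|m]] //=; lia.
have hl1 : 1 <= up_log 2 L.
  by rewrite up_log_gt0; lia.
rewrite /k; set j := up_log 2 L.
move: hd hl1 hDelta; set D := #|children par r u|; nia.
Qed.
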